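(* Let $1\le d\le n$. If $x\in\mathbb{R}^n$ satisfies $e_{d-1}(x)=0$, then $$|e_d(x)|\ge \frac{\binom{n}{d}}{(2n^{d+1})^{n-d}}\,|m_d(x)|.$$
   Context: $e_k(x)=\sum_{S\subseteq[n],|S|=k}\prod_{i\in S}x_i$ is the $k$-th elementary symmetric polynomial (with $e_0=1$), and $m_d(x)=\max_{S\subseteq[n],|S|=d}\prod_{i\in S}|x_i|$ is the product of the $d$ largest entries of $x$ in absolute value. *)

(* Defs.v *)
From mathcomp Require Import all_boot all_order all_algebra.
Set Implicit Arguments. Unset Strict Implicit. Unset Printing Implicit Defensive.
Import Order.TTheory GRing.Theory Num.Theory.
Local Open Scope ring_scope.

Definition elem_sym (R : realFieldType) (n k : nat) (x : 'I_n -> R) : R :=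
  \sum_(S : {set 'I_n} | #|S| == k) \prod_(i in S) x i.

(* product of the d largest entries of x in absolute value:
   max over d-subsets S of prod_{i in S} |x_i| (all values are >= 0, so 0 is
   a neutral initial value for the max) *)
Definition mtop (R : realFieldType) (n d : nat) (x : 'I_n -> R) : R :=
  \big[Num.max/0]_(S : {set 'I_n} | #|S| == d) \prod_(i in S) `|x i|.

(* Main.v *)
Require Import Defs.
From mathcomp Require Import all_boot all_order all_algebra.
From mathcomp Require Import ring lra zify.
Set Implicit Arguments. Unset Strict Implicit. Unset Printing Implicit Defensive.
Import Order.TTheory GRing.Theory Num.Theory.
Local Open Scope ring_scope.

Lemma L3 (R : realFieldType) (q k : nat) : (q <= k)%N ->
  \sum_(p < k.+1) ('C(q, p)%:R / 'C(k, p)%:R : R) = k.+1%:R / (k.+1 - q)%:R.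
Proof.
elim: q k => [|q IH] k qk.
  rewrite big_ord_recl /= !bin0 divr1 subn0 divff ?pnatr_eq0 //.
  by rewrite big1 ?addr0 // => i _; rewrite bin0n /= mul0r.
case: k qk => [//|k] qk.
rewrite big_ord_recl /= !bin0 divr1.
have e : forall i : 'I_k.+1, ('C(q.+1, (bump 0 i))%:R / 'C(k.+1, bump 0 i)%:R : R)
   = q.+1%:R / k.+1%:R * ('C(q, i)%:R / 'C(k, i)%:R).
  move=> i; rewrite /bump /= add1n.
  have h1 : ('C(q.+1, i.+1) * i.+1 = q.+1 * 'C(q, i))%N by rewrite mulnC -mul_bin_diag.
  have h2 : ('C(k.+1, i.+1) * i.+1 = k.+1 * 'C(k, i))%N by rewrite mulnC -mul_bin_diag.
  have ck : 'C(k, i)%:R != 0 :> R by rewrite pnatr_eq0 -lt0n bin_gt0 -ltnS.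
  have ck1 : 'C(k.+1, i.+1)%:R != 0 :> R by rewrite pnatr_eq0 -lt0n bin_gt0 ltnS -ltnS.
  have i1 : i.+1%:R != 0 :> R by rewrite pnatr_eq0.
  have k1 : k.+1%:R != 0 :> R by rewrite pnatr_eq0.
  have H1 : ('C(q.+1, i.+1)%:R : R) = q.+1%:R * 'C(q, i)%:R / i.+1%:R.
    by rewrite -natrM -h1 natrM mulfK.
  have H2 : ('C(k.+1, i.+1)%:R : R) = k.+1%:R * 'C(k, i)%:R / i.+1%:R.
    by rewrite -natrM -h2 natrM mulfK.
  rewrite H1 H2; field.
  by rewrite ck !nat1r k1 i1.
rewrite (eq_bigr _ (fun i _ => e i)) -mulr_sumr IH // subSS.
have k1 : k.+1%:R != 0 :> R by rewrite pnatr_eq0.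
have kq : (k.+1 - q)%:R != 0 :> R by rewrite pnatr_eq0 subn_eq0 -ltnNge.
have hk : (k.+2%:R : R) = (k.+1 - q)%:R + q.+1%:R.
  by rewrite -natrD addnS subnK // ltnW.
rewrite hk; field.
by rewrite kq nat1r k1.
Qed.

Section Main.
Variables (R : realFieldType) (T : finType) (x : T -> R).

Local Notation ps S := (\prod_(i in S) x i).

Lemma L1 (p k : nat) :
  \sum_(P : {set T} | #|P| == p) (\sum_(S : {set T} | (#|S| == k) && (P \subset S)) ps S) ^+ 2
  = \sum_(S : {set T} | #|S| == k) \sum_(S' : {set T} | #|S'| == k)
       'C(#|S :&: S'|, p)%:R * (ps S * ps S').
Proof.
under eq_bigr => P _ do rewrite big_mkcondr /= expr2 big_distrlr /=.
rewrite exchange_big /=.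
apply: eq_bigr => S HS.
rewrite exchange_big /=.
apply: eq_bigr => S' HS'.
rewrite (bigID (fun P : {set T} => P \subset S :&: S')) /=.
rewrite [X in _ + X]big1 ?addr0; last first.
  by move=> P /andP[_]; rewrite subsetI; case: (P \subset S); case: (P \subset S') => //; rewrite ?mul0r ?mulr0.
rewrite (eq_bigr (fun _ => ps S * ps S')); last first.
  by move=> P /andP[_]; rewrite subsetI => /andP[-> ->].
rewrite (eq_bigl (fun P => P \in [set P : {set T} | P \subset S :&: S' & #|P| == p])); last first.
  by move=> P; rewrite inE andbC.
by rewrite sumr_const cards_draws mulr_natl.
Qed.

Lemma conv (X Y : {set T}) (c : R) : #|X :\: Y|%:R * c = \sum_(i in X :\: Y) c.
Proof. by rewrite sumr_const mulr_natl. Qed.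

Lemma L2 (j : nat) (g : nat -> R) :
  \sum_(S : {set T} | #|S| == j.+1) \sum_(S' : {set T} | #|S'| == j.+1)
      #|S' :\: S|%:R * (g #|S :&: S'| * (ps S * ps S'))
  = \sum_(B : {set T} | #|B| == j.+2) \sum_(A : {set T} | #|A| == j)
      #|B :\: A|%:R * (g #|A :&: B| * (ps A * ps B)).
Proof.
rewrite (eq_bigr (fun S => \sum_(S' : {set T} | #|S'| == j.+1) \sum_(i in S' :\: S)
   (g #|S :&: S'| * (ps S * ps S')))); last by move=> S _; apply: eq_bigr => S' _; rewrite conv.
rewrite [RHS](eq_bigr (fun B => \sum_(A : {set T} | #|A| == j) \sum_(i in B :\: A)
   (g #|A :&: B| * (ps A * ps B)))); last by move=> B _; apply: eq_bigr => A _; rewrite conv.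
under eq_bigr => S _ do rewrite pair_big_dep.
under [RHS]eq_bigr => B _ do rewrite pair_big_dep.
rewrite !pair_big_dep /=.
pose h (q : {set T} * ({set T} * T)) := (q.2.2 |: q.1, (q.2.1 :\ q.2.2, q.2.2)).
pose h' (q : {set T} * ({set T} * T)) := (q.1 :\ q.2.2, (q.2.2 |: q.2.1, q.2.2)).
rewrite [RHS](reindex_onto h h') /=; last first.
  case=> B [A i] /= /andP[_ /andP[_]]; rewrite inE => /andP[iA iB].
  by rewrite /h /= setD1K // setU1K.
have E1 (i : T) (S : {set T}) : ((i |: S) :\ i == S) = (i \notin S).
  apply/eqP/idP => [<-|iS]; first by rewrite !inE eqxx.
  by rewrite setU1K.
have E2 (i : T) (S : {set T}) : (i |: (S :\ i) == S) = (i \in S).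
  apply/eqP/idP => [<-|iS]; first by rewrite !inE eqxx.
  by rewrite setD1K.
apply: eq_big.
  move=> [S [S' i]] /=.
  rewrite /h /h' /= !xpair_eqE E1 E2 eqxx andbT !inE eqxx /= andbT.
  case iS: (i \in S); case iS': (i \in S') => /=; rewrite ?andbF //.
  rewrite cardsU1 iS (cardsD1 i S') iS' add1n !eqSS.
  by case: (#|S| == j.+1); case: (#|S'| == j.+1) => //; rewrite andbT.
move=> [S [S' i]] /= /and3P[_ _]; rewrite inE => /andP[iS iS'].
have -> : (S' :\ i) :&: (i |: S) = S :&: S'.
  apply/setP => y; rewrite !inE.
  case: (eqVneq y i) => [->|]; first by rewrite (negbTE iS).
  by rewrite andbC.
rewrite (big_setD1 i iS') (big_setU1 _ iS) /=.
ring.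
Qed.


Definition esym k := \sum_(S : {set T} | #|S| == k) ps S.

Lemma L4 (j : nat) :
  (j.+2%:R)^-1 * \sum_(P : {set T} | #|P| == j.+1) (ps P) ^+ 2
  <= esym j.+1 ^+ 2 - esym j * esym j.+2.
Proof.
set k := j.+1.
pose g (q : nat) : R := ((k.+1 - q)%:R)^-1.
have Ha : esym k ^+ 2 = \sum_(S : {set T} | #|S| == k) \sum_(S' : {set T} | #|S'| == k) (ps S * ps S').
  by rewrite expr2 /esym big_distrlr.
have Hb : esym j * esym k.+1 = \sum_(S : {set T} | #|S| == k) \sum_(S' : {set T} | #|S'| == k)
     #|S' :\: S|%:R * (g #|S :&: S'| * (ps S * ps S')).
  rewrite (L2 j g) mulrC /esym big_distrlr /=.
  apply: eq_bigr => B /eqP cB; apply: eq_bigr => A /eqP cA.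
  have qA : (#|A :&: B| <= j)%N by rewrite -cA subset_leq_card // subsetIl.
  rewrite cardsD cB setIC /g mulrA mulfV ?mul1r ?[ps A * _]mulrC //.
  by rewrite pnatr_eq0 subn_eq0 -ltnNge ltnS (leq_trans qA).
have Hc : esym k ^+ 2 - esym j * esym k.+1 = \sum_(S : {set T} | #|S| == k) \sum_(S' : {set T} | #|S'| == k)
     (g #|S :&: S'| * (ps S * ps S')).
  rewrite Ha Hb -sumrB; apply: eq_bigr => S /eqP cS.
  rewrite -sumrB; apply: eq_bigr => S' /eqP cS'.
  have qk : (#|S :&: S'| <= k)%N by rewrite -cS subset_leq_card // subsetIl.
  rewrite cardsD cS' setIC mulrA -{1}[ps S * ps S']mul1r -mulrBl; congr (_ * _).
  rewrite /g.
  have hq : (k.+1 - #|S :&: S'|)%:R = (k - #|S :&: S'|)%:R + 1 :> R by rewrite subSn // natr1.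
  have nz : (k.+1 - #|S :&: S'|)%:R != 0 :> R by rewrite pnatr_eq0 subn_eq0 -ltnNge ltnS.
  by rewrite hq; field; rewrite -hq.
have Hg : forall S S' : {set T}, #|S| == k -> g #|S :&: S'| =
    k.+1%:R^-1 * \sum_(p < k.+1) ('C(#|S :&: S'|, p)%:R / 'C(k, p)%:R).
  move=> S S' /eqP cS.
  have qk : (#|S :&: S'| <= k)%N by rewrite -cS subset_leq_card // subsetIl.
  have k1 : k.+1%:R != 0 :> R by rewrite pnatr_eq0.
  by rewrite (L3 _ qk) mulrA mulVf ?mul1r.
have Hd : \sum_(S : {set T} | #|S| == k) \sum_(S' : {set T} | #|S'| == k)
     (g #|S :&: S'| * (ps S * ps S')) =
   k.+1%:R^-1 * \sum_(p < k.+1) ('C(k,p)%:R^-1 *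
     \sum_(S : {set T} | #|S| == k) \sum_(S' : {set T} | #|S'| == k)
       'C(#|S :&: S'|, p)%:R * (ps S * ps S')).
  have pull : forall (a : R) (F : {set T} -> {set T} -> R),
     a * (\sum_(S : {set T} | #|S| == k) \sum_(S' : {set T} | #|S'| == k) F S S') =
     \sum_(S : {set T} | #|S| == k) \sum_(S' : {set T} | #|S'| == k) (a * F S S').
    by move=> a F; rewrite mulr_sumr; apply: eq_bigr => S _; rewrite mulr_sumr.
  symmetry; rewrite mulr_sumr.
  under eq_bigr => p _ do rewrite pull pull.
  rewrite exchange_big /=; apply: eq_bigr => S cS.
  rewrite exchange_big /=; apply: eq_bigr => S' cS'.
  rewrite Hg // mulr_sumr mulr_suml; apply: eq_bigr => p _.
  by ring.
rewrite Hc Hd.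
apply: ler_wpM2l; first by rewrite invr_ge0 ler0n.
under [X in _ <= X]eq_bigr => p _ do rewrite -L1.
rewrite (bigD1 ord_max) //= binn invr1 mul1r.
have -> : \sum_(P : {set T} | #|P| == k) ps P ^+ 2 =
   \sum_(P : {set T} | #|P| == k) (\sum_(S : {set T} | (#|S| == k) && (P \subset S)) ps S) ^+ 2.
  apply: eq_bigr => P /eqP cP; congr (_ ^+ 2).
  rewrite (big_pred1 P) // => S /=.
  apply/andP/eqP => [[/eqP cS PS]|->]; last by rewrite cP eqxx subxx.
  by apply/eqP; rewrite eq_sym eqEcard PS cS cP leqnn.
rewrite lerDl; apply: sumr_ge0 => p _; apply: mulr_ge0; first by rewrite invr_ge0 ler0n.
by apply: sumr_ge0 => P _; apply: sqr_ge0.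
Qed.

Definition mt d := \big[Num.max/0]_(S : {set T} | #|S| == d) \prod_(i in S) `|x i|.

Lemma mt_ge0 d : 0 <= mt d.
Proof. exact: bigmax_ge_id. Qed.

Lemma mt_ub d (S : {set T}) : #|S| == d -> `|ps S| <= mt d.
Proof. by move=> cS; rewrite normr_prod; apply: (le_bigmax_cond _ _ cS). Qed.

Lemma mt_att d : mt d = 0 \/ exists S : {set T}, #|S| == d /\ mt d = `|ps S|.
Proof.
rewrite /mt; apply: (big_ind (fun y => y = 0 \/ exists S : {set T}, #|S| == d /\ y = `|ps S|)).
- by left.
- move=> a b Ha Hb; case: (leP a b) => _; [exact: Hb | exact: Ha].
- by move=> S cS; right; exists S; split => //; rewrite normr_prod.
Qed.

Lemma esym_le d : `|esym d| <= 'C(#|T|, d)%:R * mt d.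
Proof.
apply: (le_trans (ler_norm_sum _ _ _)).
apply: (le_trans (ler_sum _ (fun S cS => mt_ub cS))).
rewrite -card_draws mulr_natl -sumr_const.
by rewrite (eq_bigl (fun S => S \in [set A : {set T} | #|A| == d])) // => S; rewrite inE.
Qed.

Lemma mt0S d : mt d = 0 -> mt d.+1 = 0.
Proof.
move=> h0; case: (mt_att d.+1) => [//|[S [cS ->]]].
have : (0 < #|S|)%N by rewrite (eqP cS).
rewrite card_gt0 => /set0Pn [i iS].
have cS' : #|S :\ i| == d by move: cS; rewrite (cardsD1 i S) iS add1n eqSS.
have hle := mt_ub cS'; rewrite h0 in hle.
have h1 : `|ps (S :\ i)| = 0 by apply/eqP; rewrite eq_le hle normr_ge0.
by rewrite (big_setD1 i iS) /= normrM h1 mulr0.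
Qed.

Lemma mt_lc j : mt j.+2 * mt j <= mt j.+1 ^+ 2.
Proof.
case: (mt_att j.+2) => [->|[S [cS ->]]]; first by rewrite mul0r sqr_ge0.
case: (mt_att j) => [->|[U [cU ->]]]; first by rewrite mulr0 sqr_ge0.
have : ~~ (S \subset U).
  apply/negP => /subset_leq_card; rewrite (eqP cS) (eqP cU).
  by rewrite ltnNge leqnSn.
move=> /subsetPn [i iS iU].
have -> : `|ps S| * `|ps U| = `|ps (S :\ i)| * `|ps (i |: U)|.
  by rewrite (big_setD1 i iS) (big_setU1 _ iU) /= !normrM; ring.
rewrite expr2; apply: ler_pM; rewrite ?normr_ge0 //; apply: mt_ub.
  by move: cS; rewrite (cardsD1 i S) iS add1n eqSS.
by rewrite cardsU1 iU (eqP cU).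
Qed.

Lemma key j : esym j.+1 = 0 -> mt j.+2 <= (j.+2 * 'C(#|T|, j))%:R * `|esym j.+2|.
Proof.
move=> e0.
have H4 := L4 j; rewrite e0 expr0n /= sub0r in H4.
have Hs : mt j.+1 ^+ 2 <= \sum_(P : {set T} | #|P| == j.+1) ps P ^+ 2.
  case: (mt_att j.+1) => [->|[S [cS ->]]].
    by rewrite expr0n /=; apply: sumr_ge0 => P _; apply: sqr_ge0.
  rewrite (bigD1 S) //= real_normK ?num_real // lerDl.
  by apply: sumr_ge0 => P _; apply: sqr_ge0.
have j2 : 0 < j.+2%:R :> R by rewrite ltr0n.
have H5 : mt j.+1 ^+ 2 <= j.+2%:R * (`|esym j| * `|esym j.+2|).
  apply: (le_trans Hs).
  have j2' : 0 < (j.+2%:R)^-1 :> R by rewrite invr_gt0.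
  rewrite -(ler_pM2l j2') mulKf ?gt_eqF //.
  apply: (le_trans H4).
  by rewrite -normrM -normrN; apply: ler_norm.
have H6 := mt_lc j.
have H7 := esym_le j.
case: (eqVneq (mt j) 0) => [h0|hn0].
  by rewrite (mt0S (mt0S h0)) mulr_ge0 ?normr_ge0 ?ler0n.
have mpos : 0 < mt j by rewrite lt_def hn0 mt_ge0.
rewrite -(ler_pM2r mpos).
apply: (le_trans H6); apply: (le_trans H5).
rewrite natrM -!mulrA ler_wpM2l ?ler0n //.
rewrite [X in _ <= X]mulrCA [X in _ <= X]mulrC ler_wpM2r ?normr_ge0 //.
Qed.

End Main.

Local Open Scope nat_scope.
Lemma bin_le_exp n m : 'C(n, m) <= n ^ m.
Proof.
elim: m n => [|m IH] [|n] //.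
have h := mul_bin_diag n.+1 m; rewrite /= in h.
apply: (@leq_trans (m.+1 * 'C(n.+1, m.+1))); first exact: leq_pmull.
rewrite -h expnS leq_mul2l /=.
apply: (leq_trans (IH n)).
by case: m {IH h} => [|m] //; rewrite leq_exp2r.
Qed.

Lemma natineq n j : j.+2 < n ->
  'C(n, j.+2) * (j.+2 * 'C(n, j)) <= (2 * n ^ j.+3) ^ (n - j.+2).
Proof.
move=> jn.
have n0 : 0 < n by apply: leq_trans jn.
have h1 : 'C(n, j.+2) <= n ^ (n - j.+2).
  by rewrite -bin_sub ?(ltnW jn) // bin_le_exp.
have h2 : 'C(n, j) <= n ^ j by apply: bin_le_exp.
have h3 : j.+2 <= n by apply: ltnW.
apply: (@leq_trans (n ^ (n - j.+2) * (n * n ^ j))).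
  by apply: leq_mul => //; apply: leq_mul.
rewrite -expnS -expnD.
apply: (@leq_trans ((n ^ j.+3) ^ (n - j.+2))).
  rewrite -expnM leq_pexp2l //; nia.
rewrite expnMn; apply: leq_pmull; by rewrite expn_gt0.
Qed.

Local Open Scope ring_scope.
Unset Implicit Arguments.

Theorem lemma5 (R : realFieldType) (n d : nat) (x : 'I_n -> R) :
  (1 <= d)%N -> (d <= n)%N ->
  elem_sym (d.-1) x = 0 ->
  `|elem_sym d x| >= ('C(n, d))%:R / ((2 * n ^ d.+1) ^ (n - d))%:R * `|mtop d x|.
Proof.
move=> d1 dn e0.
have Em : mtop d x = mt x d by [].
rewrite Em ger0_norm ?mt_ge0 //.
case: d d1 dn e0 Em => [//|[|j]] _ dn e0 _.
  have e1 : elem_sym 0 x = 1.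
    by rewrite /elem_sym (big_pred1 set0) ?big_set0 // => S; rewrite /= cards_eq0.
  by move: e0; rewrite /= e1 => /eqP; rewrite oner_eq0.
have Ee : elem_sym j.+2 x = esym x j.+2 by [].
rewrite Ee.
case: (ltngtP j.+2 n) => [lt|gt|eq].
- have hk := key e0; rewrite card_ord in hk.
  have D0 : (0 < (2 * n ^ j.+3) ^ (n - j.+2))%N by rewrite expn_gt0 muln_gt0 expn_gt0 (leq_trans _ lt).
  apply: (le_trans (y := 'C(n, j.+2)%:R / ((2 * n ^ j.+3) ^ (n - j.+2))%:R *
                         ((j.+2 * 'C(n, j))%:R * `|esym x j.+2|))).
    by apply: ler_wpM2l => //; rewrite divr_ge0 ?ler0n.
  rewrite [X in X <= _](_ : _ = ('C(n, j.+2) * (j.+2 * 'C(n, j)))%:R /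
       ((2 * n ^ j.+3) ^ (n - j.+2))%:R * `|esym x j.+2|); last by rewrite !natrM; ring.
  apply: ler_piMl; first exact: normr_ge0.
  rewrite ler_pdivrMr ?ltr0n // mul1r ler_nat.
  exact: natineq.
- by move: dn; rewrite leqNgt gt.
- rewrite eq binn subnn expn0 divr1 mul1r.
  case: (mt_att x n) => [->|[S [cS ->]]]; first exact: normr_ge0.
  have -> : S = setT by apply/eqP; rewrite eqEcard subsetT cardsT (eqP cS) card_ord leqnn.
  rewrite /esym (big_pred1 setT) // => U.
  rewrite /= eqEcard subsetT cardsT card_ord /=.
  by have hU := max_card U; rewrite card_ord in hU; rewrite eqn_leq hU.
Qed.
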